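(* Suppose Assumptions 1–4 hold and $p$ is convex. Let $\mathbf{x}$ be a Cournot candidate and $\mathbf{x}^S$ a social optimum. (a) If $p(X)=p(X^S)$, then $\gamma(\mathbf{x})=1$. (b) If $p(X)\neq p(X^S)$, let $c=|p'(X)|$, $d=\left|\dfrac{p(X^S)-p(X)}{X^S-X}\right|$ and $\overline c=c/d$. Then $\overline c\ge1$ and $$1>\gamma(\mathbf{x})\ge f(\overline c):=\frac{\phi^2+2}{\phi^2+2\phi+\overline c},\qquad \phi=\max\left\{\frac{2-\overline c+\sqrt{\overline c^{\,2}-4\overline c+12}}{2},\,1\right\}.$$
   Context: Cournot model: $N$ suppliers, inverse demand $p:[0,\infty)\to[0,\infty)$, supplier $n$ has cost $C_n:[0,\infty)\to[0,\infty)$ and chooses $x_n\ge0$; $X=\sum_n x_n$, $X^S=\sum_n x_n^S$. $\partial_\pm$ denote right/left derivatives; $C_n'(0)$ is the right derivative at $0$. Assumption 1: each $C_n$ is convex, continuous, nondecreasing on $[0,\infty)$, continuously differentiable on $(0,\infty)$, with $C_n(0)=0$. Assumption 2: $p$ is continuous, nonnegative, nonincreasing, $p(0)>0$; its right derivative at $0$ exists and at every $q>0$ its left and right derivatives exist. Assumption 3: there exists $R>0$ such that $p(R)\le\min_n C_n'(0)$. Assumption 4: $p(0)>\min_n C_n'(0)$. Social welfare of $\mathbf{x}\ge0$: $W(\mathbf{x})=\int_0^X p(q)\,dq-\sum_{n=1}^N C_n(x_n)$; a social optimum $\mathbf{x}^S$ maximizes $W$. Efficiency: $\gamma(\mathbf{x})=W(\mathbf{x})/W(\mathbf{x}^S)$.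 A nonnegative vector $\mathbf{x}$ is a Cournot candidate if for every $n$: $C_n'(x_n)\le p(X)+x_n\,\partial_-p(X)$ whenever $x_n>0$, and $C_n'(x_n)\ge p(X)+x_n\,\partial_+p(X)$. (For convex $p$, $p$ is differentiable at $X$ for any Cournot candidate with $X>0$.) *)

(* Defs.v *)
From Stdlib Require Import Reals Lra ClassicalEpsilon.
Open Scope R_scope.

(* Finite sum over indices 0..N-1 (suppliers are indexed 0..N-1). *)
Fixpoint rsum (N : nat) (f : nat -> R) : R :=
  match N with
  | O => 0
  | S k => rsum k f + f k
  end.

(* Riemann integral of f over [a,b] (RiemannInt is proof-irrelevant);
   chosen by epsilon; for continuous f this is the usual integral. *)
Definition Rint (f : R -> R) (a b : R) : R :=
  epsilon (inhabits 0) (fun I => exists pr : Riemann_integrable f a b, RiemannInt pr = I).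

Definition convex_nonneg (f : R -> R) : Prop :=
  forall x y t, 0 <= x -> 0 <= y -> 0 <= t <= 1 ->
    f (t * x + (1 - t) * y) <= t * f x + (1 - t) * f y.

Definition continuous_nonneg (f : R -> R) : Prop :=
  forall x, 0 <= x -> forall eps, 0 < eps -> exists delta, 0 < delta /\
    forall y, 0 <= y -> Rabs (y - x) < delta -> Rabs (f y - f x) < eps.

Definition nondecreasing_nonneg (f : R -> R) : Prop :=
  forall x y, 0 <= x -> x <= y -> f x <= f y.

Definition nonincreasing_nonneg (f : R -> R) : Prop :=
  forall x y, 0 <= x -> x <= y -> f y <= f x.

Definition is_right_deriv (f : R -> R) (x l : R) : Prop :=
  forall eps, 0 < eps -> exists delta, 0 < delta /\
    forall h, 0 < h < delta -> Rabs ((f (x + h) - f x) / h - l) < eps.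

Definition is_left_deriv (f : R -> R) (x l : R) : Prop :=
  forall eps, 0 < eps -> exists delta, 0 < delta /\
    forall h, 0 < h < delta -> Rabs ((f (x - h) - f x) / (- h) - l) < eps.

(* Assumption 1 for a cost C with derivative function dC
   (dC x = C'(x) for x > 0, dC 0 = right derivative at 0). *)
Definition assumption1_cost (C dC : R -> R) : Prop :=
  convex_nonneg C /\ continuous_nonneg C /\ nondecreasing_nonneg C /\
  (forall x, 0 < x -> derivable_pt_lim C x (dC x)) /\
  (forall x, 0 < x -> continuity_pt dC x) /\
  is_right_deriv C 0 (dC 0) /\
  C 0 = 0.

(* Assumption 2, with dpp = right derivative, dpm = left derivative of p *)
Definition assumption2 (p dpp dpm : R -> R) : Prop :=
  continuous_nonneg p /\ (forall q, 0 <= q -> 0 <= p q) /\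
  nonincreasing_nonneg p /\ 0 < p 0 /\
  is_right_deriv p 0 (dpp 0) /\
  (forall q, 0 < q -> is_left_deriv p q (dpm q) /\ is_right_deriv p q (dpp q)).

Definition nonneg_vec (N : nat) (x : nat -> R) : Prop :=
  forall n, (n < N)%nat -> 0 <= x n.

Definition total (N : nat) (x : nat -> R) : R := rsum N x.

Definition welfare (N : nat) (p : R -> R) (C : nat -> R -> R) (x : nat -> R) : R :=
  Rint p 0 (total N x) - rsum N (fun n => C n (x n)).

Definition social_optimum (N : nat) (p : R -> R) (C : nat -> R -> R) (xS : nat -> R) : Prop :=
  nonneg_vec N xS /\
  forall y, nonneg_vec N y -> welfare N p C y <= welfare N p C xS.

Definition efficiency (N : nat) (p : R -> R) (C : nat -> R -> R) (x xS : nat -> R) : R :=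
  welfare N p C x / welfare N p C xS.

Definition cournot_candidate (N : nat) (p dpp dpm : R -> R) (dC : nat -> R -> R)
  (x : nat -> R) : Prop :=
  nonneg_vec N x /\
  forall n, (n < N)%nat ->
    (0 < x n -> dC n (x n) <= p (total N x) + x n * dpm (total N x)) /\
    dC n (x n) >= p (total N x) + x n * dpp (total N x).

Definition phi_of (cb : R) : R :=
  Rmax ((2 - cb + sqrt (cb ^ 2 - 4 * cb + 12)) / 2) 1.

Definition f_bound (cb : R) : R :=
  let ph := phi_of cb in (ph ^ 2 + 2) / (ph ^ 2 + 2 * ph + cb).

(* Main.v *)
Require Import Defs.
From Stdlib Require Import Reals.
From Stdlib Require Import Lra Psatz Arith Lia ClassicalEpsilon Classical.
From Coquelicot Require Import Coquelicot.
Open Scope R_scope.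

Lemma div_le_l (A B p : R) : 0 < p -> A <= B * p -> A / p <= B.
Proof. intros Hp H. apply (Rmult_le_reg_r p); auto.
  replace (A / p * p) with A by (field; lra). lra. Qed.
Lemma div_le_r (A B p : R) : 0 < p -> B * p <= A -> B <= A / p.
Proof. intros Hp H. apply (Rmult_le_reg_r p); auto.
  replace (A / p * p) with A by (field; lra). lra. Qed.
Lemma div_lt_r (A B p : R) : 0 < p -> A / p < B -> A < B * p.
Proof. intros Hp H. apply (Rmult_lt_compat_r p) in H; auto.
  replace (A / p * p) with A in H by (field; lra). lra. Qed.
Lemma div_gt_r (A B p : R) : 0 < p -> B < A / p -> B * p < A.
Proof. intros Hp H. apply (Rmult_lt_compat_r p) in H; auto.
  replace (A / p * p) with A in H by (field; lra). lra. Qed.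

Lemma rd_le f x l s d0 : is_right_deriv f x l -> 0 < d0 ->
  (forall h, 0 < h < d0 -> (f (x + h) - f x) / h <= s) -> l <= s.
Proof.
  intros Hd Hd0 H. destruct (Rle_or_lt l s) as [|Hlt]; auto.
  destruct (Hd (l - s)) as [de [Hde Hq]]; [lra|].
  set (h := Rmin de d0 / 2).
  assert (0 < h < de /\ h < d0) by (unfold h; pose proof (Rmin_l de d0); pose proof (Rmin_r de d0);
    pose proof (Rmin_glb_lt de d0 0 ltac:(lra) ltac:(lra)); lra).
  specialize (Hq h ltac:(lra)). specialize (H h ltac:(lra)).
  apply Rabs_def2 in Hq. lra.
Qed.
Lemma rd_ge f x l s d0 : is_right_deriv f x l -> 0 < d0 ->
  (forall h, 0 < h < d0 -> s <= (f (x + h) - f x) / h) -> s <= l.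
Proof.
  intros Hd Hd0 H. destruct (Rle_or_lt s l) as [|Hlt]; auto.
  destruct (Hd (s - l)) as [de [Hde Hq]]; [lra|].
  set (h := Rmin de d0 / 2).
  assert (0 < h < de /\ h < d0) by (unfold h; pose proof (Rmin_l de d0); pose proof (Rmin_r de d0);
    pose proof (Rmin_glb_lt de d0 0 ltac:(lra) ltac:(lra)); lra).
  specialize (Hq h ltac:(lra)). specialize (H h ltac:(lra)).
  apply Rabs_def2 in Hq. lra.
Qed.
Lemma ld_le f x l s d0 : is_left_deriv f x l -> 0 < d0 ->
  (forall h, 0 < h < d0 -> (f (x - h) - f x) / (- h) <= s) -> l <= s.
Proof.
  intros Hd Hd0 H. destruct (Rle_or_lt l s) as [|Hlt]; auto.
  destruct (Hd (l - s)) as [de [Hde Hq]]; [lra|].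
  set (h := Rmin de d0 / 2).
  assert (0 < h < de /\ h < d0) by (unfold h; pose proof (Rmin_l de d0); pose proof (Rmin_r de d0);
    pose proof (Rmin_glb_lt de d0 0 ltac:(lra) ltac:(lra)); lra).
  specialize (Hq h ltac:(lra)). specialize (H h ltac:(lra)).
  apply Rabs_def2 in Hq. lra.
Qed.
Lemma ld_ge f x l s d0 : is_left_deriv f x l -> 0 < d0 ->
  (forall h, 0 < h < d0 -> s <= (f (x - h) - f x) / (- h)) -> s <= l.
Proof.
  intros Hd Hd0 H. destruct (Rle_or_lt s l) as [|Hlt]; auto.
  destruct (Hd (s - l)) as [de [Hde Hq]]; [lra|].
  set (h := Rmin de d0 / 2).
  assert (0 < h < de /\ h < d0) by (unfold h; pose proof (Rmin_l de d0); pose proof (Rmin_r de d0);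
    pose proof (Rmin_glb_lt de d0 0 ltac:(lra) ltac:(lra)); lra).
  specialize (Hq h ltac:(lra)). specialize (H h ltac:(lra)).
  apply Rabs_def2 in Hq. lra.
Qed.

Lemma dpl_right f x l : derivable_pt_lim f x l -> is_right_deriv f x l.
Proof.
  intros H eps He. destruct (H eps He) as [de Hde]. exists de. split; [apply cond_pos|].
  intros h Hh. apply Hde; [lra|]. rewrite Rabs_right; lra.
Qed.
Lemma dpl_left f x l : derivable_pt_lim f x l -> is_left_deriv f x l.
Proof.
  intros H eps He. destruct (H eps He) as [de Hde]. exists de. split; [apply cond_pos|].
  intros h Hh. replace (x - h) with (x + - h) by ring. apply Hde; [lra|].
  rewrite Rabs_left; lra.
Qed.

Lemma cont_left_le p x a d0 : continuous_nonneg p -> 0 <= x - d0 -> 0 < d0 ->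
  (forall e, 0 < e < d0 -> a <= p (x - e)) -> a <= p x.
Proof.
  intros Hc Hx Hd0 H. destruct (Rle_or_lt a (p x)) as [|Hlt]; auto.
  destruct (Hc x ltac:(lra) (a - p x) ltac:(lra)) as [de [Hde Hq]].
  set (e := Rmin de d0 / 2).
  assert (0 < e < de /\ e < d0) by (unfold e; pose proof (Rmin_l de d0); pose proof (Rmin_r de d0);
    pose proof (Rmin_glb_lt de d0 0 ltac:(lra) ltac:(lra)); lra).
  specialize (Hq (x - e) ltac:(lra)). rewrite Rabs_left in Hq by lra.
  specialize (Hq ltac:(lra)). specialize (H e ltac:(lra)). apply Rabs_def2 in Hq. lra.
Qed.
Lemma cont_right_ge p x a d0 : continuous_nonneg p -> 0 <= x -> 0 < d0 ->
  (forall e, 0 < e < d0 -> p (x + e) <= a) -> p x <= a.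
Proof.
  intros Hc Hx Hd0 H. destruct (Rle_or_lt (p x) a) as [|Hlt]; auto.
  destruct (Hc x ltac:(lra) (p x - a) ltac:(lra)) as [de [Hde Hq]].
  set (e := Rmin de d0 / 2).
  assert (0 < e < de /\ e < d0) by (unfold e; pose proof (Rmin_l de d0); pose proof (Rmin_r de d0);
    pose proof (Rmin_glb_lt de d0 0 ltac:(lra) ltac:(lra)); lra).
  specialize (Hq (x + e) ltac:(lra)). rewrite Rabs_right in Hq by lra.
  specialize (Hq ltac:(lra)). specialize (H e ltac:(lra)). apply Rabs_def2 in Hq. lra.
Qed.

Lemma conv3 f a b c : convex_nonneg f -> 0 <= a < b -> b < c ->
  f b * (c - a) <= (c - b) * f a + (b - a) * f c.
Proof.
  intros Hf H1 H2. set (t := (c - b) / (c - a)).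
  assert (Ht : 0 <= t <= 1) by (unfold t; split;
    [apply div_le_r; lra | apply div_le_l; lra]).
  pose proof (Hf a c t ltac:(lra) ltac:(lra) Ht) as H.
  replace (t * a + (1 - t) * c) with b in H by (unfold t; field; lra).
  apply (Rmult_le_compat_r (c - a)) in H; [|lra].
  replace ((t * f a + (1 - t) * f c) * (c - a)) with ((c - b) * f a + (b - a) * f c) in H
    by (unfold t; field; lra). lra.
Qed.

Lemma slope_chain f a b c : convex_nonneg f -> 0 <= a < b -> b < c ->
  (f b - f a) / (b - a) <= (f c - f b) / (c - b).
Proof.
  intros Hf H1 H2. pose proof (conv3 f a b c Hf H1 H2).
  apply div_le_l; [lra|]. unfold Rdiv.
  replace ((f c - f b) * / (c - b) * (b - a)) with ((f c - f b) * (b - a) / (c - b)) by (field; lra).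
  apply div_le_r; lra.
Qed.

Lemma slope_ab_ac f a b c : convex_nonneg f -> 0 <= a < b -> b < c ->
  (f b - f a) / (b - a) <= (f c - f a) / (c - a).
Proof.
  intros Hf H1 H2. pose proof (conv3 f a b c Hf H1 H2).
  apply div_le_l; [lra|]. unfold Rdiv.
  replace ((f c - f a) * / (c - a) * (b - a)) with ((f c - f a) * (b - a) / (c - a)) by (field; lra).
  apply div_le_r; lra.
Qed.

Lemma slope_ac_bc f a b c : convex_nonneg f -> 0 <= a < b -> b < c ->
  (f c - f a) / (c - a) <= (f c - f b) / (c - b).
Proof.
  intros Hf H1 H2. pose proof (conv3 f a b c Hf H1 H2).
  apply div_le_l; [lra|]. unfold Rdiv.
  replace ((f c - f b) * / (c - b) * (c - a)) with ((f c - f b) * (c - a) / (c - b)) by (field; lra).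
  apply div_le_r; lra.
Qed.

Lemma slope4 f a b u v : convex_nonneg f -> 0 <= a < b -> b <= u -> u < v ->
  (f b - f a) / (b - a) <= (f v - f u) / (v - u).
Proof.
  intros Hf H1 H2 H3. destruct (Rle_lt_or_eq_dec b u H2) as [Hl|He].
  - eapply Rle_trans. apply (slope_chain f a b u Hf H1 Hl).
    apply (slope_chain f b u v Hf ltac:(lra) H3).
  - subst u. apply (slope_chain f a b v Hf H1 H3).
Qed.

Lemma slope_right f a g u v : convex_nonneg f -> is_right_deriv f a g ->
  0 <= a -> a <= u -> u < v -> g <= (f v - f u) / (v - u).
Proof.
  intros Hf Hd Ha H1 H2. apply (rd_le f a g _ (v - a) Hd ltac:(lra)).
  intros h Hh. replace (a + h - a) with h by ring.
  destruct (Rle_lt_or_eq_dec a u H1) as [Hl|He].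
  - destruct (Rlt_or_le (a + h) u).
    + pose proof (slope4 f a (a+h) u v Hf ltac:(lra) ltac:(lra) H2) as H4. replace (a + h - a) with h in H4 by ring. exact H4.
    +
      pose proof (slope_ab_ac f a (a+h) v Hf ltac:(lra) ltac:(lra)) as H3.
      replace (a + h - a) with h in H3 by ring. eapply Rle_trans; [exact H3|].
      apply (slope_ac_bc f a u v Hf ltac:(lra) H2).
  - subst u. pose proof (slope_ab_ac f a (a+h) v Hf ltac:(lra) ltac:(lra)) as H3.
    replace (a + h - a) with h in H3 by ring. exact H3.
Qed.

Lemma slope_left f a g u v : convex_nonneg f -> is_left_deriv f a g ->
  0 <= u -> u < v -> v <= a -> (f v - f u) / (v - u) <= g.
Proof.
  intros Hf Hd Hu H1 H2. apply (ld_ge f a g _ (a - u) Hd ltac:(lra)).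
  intros h Hh. replace ((f (a - h) - f a) / - h) with ((f a - f (a - h)) / (a - (a - h))) by (field; lra).
  destruct (Rle_lt_or_eq_dec v a H2) as [Hl|He].
  - destruct (Rlt_or_le v (a - h)).
    + apply (slope4 f u v (a-h) a Hf ltac:(lra) ltac:(lra) ltac:(lra)).
    + destruct (Rle_lt_or_eq_dec (a-h) v ltac:(lra)) as [Hl2|He2].
      * eapply Rle_trans. apply (slope_ab_ac f u v a Hf ltac:(lra) Hl).
        apply (slope_ac_bc f u (a-h) a Hf ltac:(lra) ltac:(lra)).
      * rewrite He2. apply (slope_chain f u v a Hf ltac:(lra) Hl).
  - subst v. apply (slope_ac_bc f u (a-h) a Hf ltac:(lra) ltac:(lra)).
Qed.

Lemma sub_right f a g y : convex_nonneg f -> is_right_deriv f a g ->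
  0 <= a -> a <= y -> f a + g * (y - a) <= f y.
Proof.
  intros Hf Hd Ha H. destruct (Rle_lt_or_eq_dec a y H) as [Hl|He].
  - pose proof (slope_right f a g a y Hf Hd Ha ltac:(lra) Hl).
    apply (Rmult_le_compat_r (y - a)) in H0; [|lra].
    replace ((f y - f a) / (y - a) * (y - a)) with (f y - f a) in H0 by (field; lra). lra.
  - subst y. lra.
Qed.

Lemma sub_left f a g y : convex_nonneg f -> is_left_deriv f a g ->
  0 <= y -> y <= a -> f a - f y <= g * (a - y).
Proof.
  intros Hf Hd Hy H. destruct (Rle_lt_or_eq_dec y a H) as [Hl|He].
  - pose proof (slope_left f a g y a Hf Hd Hy Hl ltac:(lra)).
    apply (Rmult_le_compat_r (a - y)) in H0; [|lra].
    replace ((f a - f y) / (a - y) * (a - y)) with (f a - f y) in H0 by (field; lra). lra.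
  - subst y. lra.
Qed.

Lemma ld_le_rd f a gl gr : convex_nonneg f -> 0 < a -> is_left_deriv f a gl -> is_right_deriv f a gr -> gl <= gr.
Proof.
  intros Hf Ha Hl Hr. apply (rd_ge f a gr gl 1 Hr ltac:(lra)).
  intros h Hh. pose proof (slope_left f a gl 0 a Hf Hl ltac:(lra) Ha ltac:(lra)) as H0.
  apply (ld_le f a gl _ a Hl Ha). intros h' Hh'.
  replace ((f (a - h') - f a) / - h') with ((f a - f (a - h')) / (a - (a - h'))) by (field; lra).
  pose proof (slope_chain f (a - h') a (a + h) Hf ltac:(lra) ltac:(lra)).
  replace (a + h - a) with h in H by ring. exact H.
Qed.


Lemma rsum_ext N f g : (forall n, (n < N)%nat -> f n = g n) -> rsum N f = rsum N g.
Proof. induction N; simpl; intros H; auto. rewrite IHN by (intros; apply H; lia). rewrite H by lia. auto. Qed.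
Lemma rsum_le N f g : (forall n, (n < N)%nat -> f n <= g n) -> rsum N f <= rsum N g.
Proof. induction N; simpl; intros H; [lra|]. pose proof (IHN ltac:(intros; apply H; lia)). pose proof (H N ltac:(lia)). lra. Qed.
Lemma rsum_plus N f g : rsum N (fun n => f n + g n) = rsum N f + rsum N g.
Proof. induction N; simpl; [lra|]. rewrite IHN. ring. Qed.
Lemma rsum_minus N f g : rsum N (fun n => f n - g n) = rsum N f - rsum N g.
Proof. induction N; simpl; [lra|]. rewrite IHN. ring. Qed.
Lemma rsum_scal N a f : rsum N (fun n => a * f n) = a * rsum N f.
Proof. induction N; simpl; [lra|]. rewrite IHN. ring. Qed.
Lemma rsum_zero N : rsum N (fun _ => 0) = 0.
Proof. induction N; simpl; lra. Qed.
Lemma rsum_ind N m g : (m < N)%nat ->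
  rsum N (fun n => if Nat.eq_dec n m then g n else 0) = g m.
Proof.
  induction N; simpl; intros H; [lia|].
  destruct (Nat.eq_dec N m).
  - subst. rewrite (rsum_ext m _ (fun _ => 0)). rewrite rsum_zero. lra.
    intros n Hn. destruct (Nat.eq_dec n m); [lia|auto].
  - rewrite IHN by lia. lra.
Qed.
Lemma rsum_upd N m f f' : (m < N)%nat -> (forall n, (n < N)%nat -> n <> m -> f' n = f n) ->
  rsum N f' = rsum N f + (f' m - f m).
Proof.
  intros Hm H.
  assert (E : forall n, (n < N)%nat -> f' n = f n + (if Nat.eq_dec n m then f' n - f n else 0)).
  { intros n Hn. destruct (Nat.eq_dec n m). lra. rewrite H by auto. lra. }
  rewrite (rsum_ext _ _ _ E). rewrite rsum_plus. rewrite (rsum_ind N m (fun n => f' n - f n)) by auto. auto.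
Qed.
Lemma rsum_single N f m : (forall n, (n < N)%nat -> 0 <= f n) -> (m < N)%nat -> f m <= rsum N f.
Proof.
  intros H Hm. rewrite <- (rsum_ind N m f Hm). apply rsum_le. intros n Hn.
  destruct (Nat.eq_dec n m); [lra| apply H; auto].
Qed.
Lemma rsum_pos_ex N f : 0 < rsum N f -> exists n, (n < N)%nat /\ 0 < f n.
Proof.
  induction N; simpl; intros H; [lra|].
  destruct (Rlt_or_le 0 (f N)). exists N; split; auto.
  destruct IHN as [n [Hn Hf]]; [lra|]. exists n; split; auto.
Qed.
Lemma rsum_neg_ex N f : rsum N f < 0 -> exists n, (n < N)%nat /\ f n < 0.
Proof.
  induction N; simpl; intros H; [lra|].
  destruct (Rlt_or_le (f N) 0). exists N; split; auto.
  destruct IHN as [n [Hn Hf]]; [lra|]. exists n; split; auto.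
Qed.
Lemma argmax_ex N (x y : nat -> R) :
  (exists m, (m < N)%nat /\ 0 < y m /\ forall n, (n < N)%nat -> 0 < y n -> x n <= x m) \/
  (forall n, (n < N)%nat -> y n <= 0).
Proof.
  induction N.
  - right. intros; lia.
  - destruct IHN as [[m [Hm [Hy Hmax]]]|Hall].
    + destruct (Rlt_or_le 0 (y N)) as [HyN|HyN].
      * destruct (Rle_or_lt (x N) (x m)).
        -- left. exists m. split; [lia|split; auto]. intros n Hn Hyn.
           destruct (Nat.eq_dec n N); [subst; auto| apply Hmax; auto; lia].
        -- left. exists N. split; [lia|split; auto]. intros n Hn Hyn.
           destruct (Nat.eq_dec n N); [subst; lra|]. pose proof (Hmax n ltac:(lia) Hyn). lra.
      * left. exists m. split; [lia|split; auto]. intros n Hn Hyn.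
        destruct (Nat.eq_dec n N); [subst; lra| apply Hmax; auto; lia].
    + destruct (Rlt_or_le 0 (y N)) as [HyN|HyN].
      * left. exists N. split; [lia|split; auto]. intros n Hn Hyn.
        destruct (Nat.eq_dec n N); [subst; lra|]. pose proof (Hall n ltac:(lia)). lra.
      * right. intros n Hn. destruct (Nat.eq_dec n N); [subst; auto| apply Hall; lia].
Qed.

Definition upd (y : nat -> R) (m : nat) (e : R) : nat -> R :=
  fun n => if Nat.eq_dec n m then y n + e else y n.

Lemma total_upd N y m e : (m < N)%nat -> total N (upd y m e) = total N y + e.
Proof.
  intros Hm. unfold total. rewrite (rsum_upd N m y (upd y m e) Hm).
  unfold upd. destruct (Nat.eq_dec m m); [ring|lia].
  intros n Hn Hnm. unfold upd. destruct (Nat.eq_dec n m); [lia|auto].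
Qed.
Lemma cost_upd N (C : nat -> R -> R) y m e : (m < N)%nat ->
  rsum N (fun n => C n (upd y m e n)) = rsum N (fun n => C n (y n)) + (C m (y m + e) - C m (y m)).
Proof.
  intros Hm. rewrite (rsum_upd N m (fun n => C n (y n)) (fun n => C n (upd y m e n)) Hm).
  unfold upd. destruct (Nat.eq_dec m m); [ring|lia].
  intros n Hn Hnm. unfold upd. destruct (Nat.eq_dec n m); [lia|auto].
Qed.


Lemma Rmax0_dist a b : Rabs (Rmax 0 a - Rmax 0 b) <= Rabs (a - b).
Proof. unfold Rmax; destruct (Rle_dec 0 a), (Rle_dec 0 b); unfold Rabs;
  repeat destruct Rcase_abs; lra. Qed.

Lemma q_cont p : continuous_nonneg p -> forall z, continuous (fun t => p (Rmax 0 t)) z.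
Proof.
  intros Hc z. apply continuity_pt_filterlim.
  intros eps Heps. destruct (Hc (Rmax 0 z) (Rmax_l 0 z) eps Heps) as [de [Hde H]].
  exists de. split; auto. intros y [_ Hy]. simpl in Hy. unfold R_dist in *. simpl. unfold R_dist.
  apply H. apply Rmax_l. pose proof (Rmax0_dist y z). lra.
Qed.

Lemma exR p a b : continuous_nonneg p -> 0 <= a -> 0 <= b -> ex_RInt p a b.
Proof.
  intros Hc Ha Hb. apply (ex_RInt_ext (fun t => p (Rmax 0 t))).
  - intros x Hx. rewrite Rmax_right; auto.
    pose proof (Rmin_glb a b 0 ltac:(lra) ltac:(lra)). lra.
  - apply (ex_RInt_continuous (V := R_CompleteNormedModule)). intros. apply q_cont; auto.
Qed.

Lemma Rint_RInt p a b : continuous_nonneg p -> 0 <= a -> 0 <= b -> Rint p a b = RInt p a b.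
Proof.
  intros Hc Ha Hb. pose proof (exR p a b Hc Ha Hb) as He.
  pose proof (ex_RInt_Reals_0 _ _ _ He) as pr.
  unfold Rint. destruct (epsilon_spec (inhabits 0) (fun I => exists pr : Riemann_integrable p a b, RiemannInt pr = I))
    as [pr' Hpr']. exists (RiemannInt pr); exists pr; auto.
  rewrite <- Hpr'. rewrite (RInt_Reals _ _ _ pr'). auto.
Qed.

Lemma Rint_diff p a b : continuous_nonneg p -> 0 <= a -> 0 <= b ->
  Rint p 0 b - Rint p 0 a = RInt p a b.
Proof.
  intros Hc Ha Hb. rewrite !Rint_RInt by (auto; lra).
  rewrite <- (RInt_Chasles p 0 a b) by (apply exR; auto; lra).
  unfold plus; simpl. ring.
Qed.

Lemma RInt_const_R (a b k : R) : RInt (fun _ => k) a b = (b - a) * k.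
Proof. rewrite RInt_const. reflexivity. Qed.

Lemma RInt_mono p a b : continuous_nonneg p -> nonincreasing_nonneg p -> 0 <= a -> a <= b ->
  (b - a) * p b <= RInt p a b <= (b - a) * p a.
Proof.
  intros Hc Hm Ha Hab. split.
  - rewrite <- RInt_const_R. apply RInt_le; auto. apply ex_RInt_const. apply exR; auto; lra.
    intros x Hx. apply Hm; lra.
  - rewrite <- RInt_const_R. apply RInt_le; auto. apply exR; auto; lra. apply ex_RInt_const.
    intros x Hx. apply Hm; lra.
Qed.

Lemma RInt_lin (A B a b : R) : RInt (fun t => A + B * t) a b = A * (b - a) + B * (b * b - a * a) / 2.
Proof.
  apply is_RInt_unique.
  replace (A * (b - a) + B * (b * b - a * a) / 2) with
    (minus ((fun t => A * t + B * (t * t) / 2) b) ((fun t => A * t + B * (t * t) / 2) a))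
    by (unfold minus, plus, opp; simpl; unfold AbelianMonoid.plus, AbelianGroup.opp; simpl; rewrite !Rdiv_def; ring).
  apply (is_RInt_derive (V := R_CompleteNormedModule) (fun t => A * t + B * (t * t) / 2)).
  - intros x _. auto_derive; auto. field.
  - intros x _. apply continuity_pt_filterlim. apply continuity_pt_plus.
    apply continuity_pt_const; intros u v; auto. apply continuity_pt_scal. apply continuity_pt_id.
Qed.

Lemma ex_lin (A B a b : R) : ex_RInt (fun t => A + B * t) a b.
Proof.
  apply (ex_RInt_continuous (V := R_CompleteNormedModule)). intros z _. apply continuity_pt_filterlim. apply continuity_pt_plus.
  apply continuity_pt_const; intros u v; auto. apply continuity_pt_scal. apply continuity_pt_id.
Qed.

Lemma RInt_lower_lin p A B a b : continuous_nonneg p -> 0 <= a -> a <= b ->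
  (forall t, a < t < b -> A + B * t <= p t) -> A * (b - a) + B * (b * b - a * a) / 2 <= RInt p a b.
Proof.
  intros Hc Ha Hab H. rewrite <- RInt_lin. apply RInt_le; auto. apply ex_lin. apply exR; auto; lra.
Qed.
Lemma RInt_upper_lin p A B a b : continuous_nonneg p -> 0 <= a -> a <= b ->
  (forall t, a < t < b -> p t <= A + B * t) -> RInt p a b <= A * (b - a) + B * (b * b - a * a) / 2.
Proof.
  intros Hc Ha Hab H. rewrite <- RInt_lin. apply RInt_le; auto. apply exR; auto; lra. apply ex_lin.
Qed.


Lemma phi_props k : 1 <= k -> 1 <= phi_of k /\
  (forall t, 1 <= t -> (phi_of k ^ 2 + 2) * (t ^ 2 + 2 * t + k) <= (t ^ 2 + 2) * (phi_of k ^ 2 + 2 * phi_of k + k)).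
Proof.
  intros Hk. unfold phi_of.
  set (s := sqrt (k ^ 2 - 4 * k + 12)).
  assert (Hs0 : 0 <= s) by apply sqrt_pos.
  assert (Hs2 : s * s = k ^ 2 - 4 * k + 12) by (apply sqrt_sqrt; nra).
  set (r := (2 - k + s) / 2).
  assert (Hr : r ^ 2 + (k - 2) * r - 2 = 0) by (unfold r; nra).
  split. apply Rmax_r.
  intros t Ht. destruct (Rle_dec r 1) as [Hr1|Hr1].
  - rewrite Rmax_right by lra.
    assert (s <= k) by (unfold r in Hr1; lra).
    assert (k >= 3) by nra.
    assert (0 <= (t-1)*(k*t+k-6)) by (apply Rmult_le_pos; nra). nra.
  - rewrite Rmax_left by lra.
    assert (Hrp : 1 < r) by lra.
    assert (E : (t ^ 2 + 2) * (r ^ 2 + 2 * r + k) - (r ^ 2 + 2) * (t ^ 2 + 2 * t + k)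
               = (r ^ 2 + 2) * (t - r) ^ 2 / r).
    { assert (Hk2 : k = (2 - r ^ 2) / r + 2) by (apply (Rmult_eq_reg_r r); [|lra];
        replace (((2 - r ^ 2) / r + 2) * r) with (2 - r^2 + 2*r) by (field; lra); nra).
      rewrite Hk2. field. lra. }
    assert (0 <= (r ^ 2 + 2) * (t - r) ^ 2 / r).
    { unfold Rdiv. apply Rmult_le_pos. apply Rmult_le_pos; [nra| apply pow2_ge_0]. left. apply Rinv_0_lt_compat. lra. }
    lra.
Qed.

Lemma f_bound_range k : 1 <= k -> 0 <= f_bound k <= 1.
Proof.
  intros Hk. unfold f_bound. destruct (phi_props k Hk) as [Hp _].
  set (ph := phi_of k) in *. split.
  - apply Rmult_le_pos. nra. left. apply Rinv_0_lt_compat. nra.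
  - apply (Rmult_le_reg_r (ph ^ 2 + 2 * ph + k)). nra.
    unfold Rdiv. rewrite Rmult_assoc, Rinv_l by nra. nra.
Qed.

Lemma key_alg k u v : 1 <= k -> 1 <= u -> 0 <= v ->
  f_bound k * (u * (k + v) - k / 2) <= (1 - f_bound k) * ((u + v) ^ 2 / 2 + u ^ 2).
Proof.
  intros Hk Hu Hv. destruct (phi_props k Hk) as [Hp Hmin].
  unfold f_bound. set (ph := phi_of k) in *.
  set (w := u + v).
  set (t := w / u).
  assert (Htu : t * u = w) by (unfold t; field; lra).
  assert (Ht : 1 <= t) by (unfold t; apply (Rmult_le_reg_r u); [lra|]; unfold Rdiv; rewrite Rmult_assoc, Rinv_l by lra; unfold w; lra).
  pose proof (Hmin t Ht) as H.
  set (Fn := ph ^ 2 + 2) in *. set (Fd := ph ^ 2 + 2 * ph + k) in *.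
  assert (HFn : 0 < Fn) by (unfold Fn; nra). assert (HFd : 0 < Fd) by (unfold Fd; nra).
  apply (Rmult_le_compat_r (u ^ 2)) in H; [|nra].
  replace (Fn * (t ^ 2 + 2 * t + k) * u ^ 2) with (Fn * (w ^ 2 + 2 * u * w + k * u ^ 2)) in H
    by (rewrite <- Htu; ring).
  replace ((t ^ 2 + 2) * Fd * u ^ 2) with ((w ^ 2 + 2 * u ^ 2) * Fd) in H by (rewrite <- Htu; ring).
  assert (H2 : Fn * (w ^ 2 + 2 * u * w + 2 * u * k - k) <= Fn * (w ^ 2 + 2 * u * w + k * u ^ 2)).
  { apply Rmult_le_compat_l; [lra|]. assert (0 <= k*(u-1)^2) by (apply Rmult_le_pos; [lra|apply pow2_ge_0]). nra. }
  replace (Fn / Fd * (u * (k + v) - k / 2)) with ((Fn * (w ^ 2 + 2 * u * w + 2 * u * k - k) - Fn * (w ^ 2 + 2 * u ^ 2)) / (2 * Fd))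
    by (unfold w; field; lra).
  replace ((1 - Fn / Fd) * (w ^ 2 / 2 + u ^ 2)) with (((w ^ 2 + 2 * u ^ 2) * Fd - Fn * (w ^ 2 + 2 * u ^ 2)) / (2 * Fd))
    by (unfold w; field; lra).
  unfold Rdiv. apply Rmult_le_compat_r. left; apply Rinv_0_lt_compat; lra. lra.
Qed.



Lemma total_nonneg N y : nonneg_vec N y -> 0 <= total N y.
Proof. intros H. unfold total. rewrite <- (rsum_zero N). apply rsum_le. auto. Qed.

Lemma nonneg_upd N y m e : nonneg_vec N y -> 0 <= y m + e -> nonneg_vec N (upd y m e).
Proof. intros H He n Hn. unfold upd. destruct (Nat.eq_dec n m); [subst; auto| apply H; auto]. Qed.

Lemma W_upd N p C y m e : continuous_nonneg p -> nonneg_vec N y -> (m < N)%nat ->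
  0 <= total N y + e ->
  welfare N p C (upd y m e) - welfare N p C y =
  RInt p (total N y) (total N y + e) - (C m (y m + e) - C m (y m)).
Proof.
  intros Hc Hy Hm He. unfold welfare. rewrite total_upd by auto. rewrite cost_upd by auto.
  rewrite <- (Rint_diff p (total N y) (total N y + e)) by (auto; apply total_nonneg; auto).
  ring.
Qed.

Lemma gain p Cm a g Y : continuous_nonneg p -> nonincreasing_nonneg p -> 0 <= Y -> 0 <= a ->
  is_right_deriv Cm a g -> g < p Y ->
  exists e, 0 < e /\ 0 < RInt p Y (Y + e) - (Cm (a + e) - Cm a).
Proof.
  intros Hc Hm HY Ha Hd Hg.
  set (eps := (p Y - g) / 2).
  destruct (Hd eps ltac:(unfold eps; lra)) as [d1 [Hd1 H1]].
  destruct (Hc Y HY eps ltac:(unfold eps; lra)) as [d2 [Hd2 H2]].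
  set (e := Rmin d1 d2 / 2).
  assert (0 < e < d1 /\ e < d2) by (unfold e; pose proof (Rmin_l d1 d2); pose proof (Rmin_r d1 d2);
    pose proof (Rmin_glb_lt d1 d2 0 ltac:(lra) ltac:(lra)); lra).
  exists e. split; [lra|].
  specialize (H1 e ltac:(lra)). specialize (H2 (Y + e) ltac:(lra)).
  rewrite Rabs_right in H2 by lra. specialize (H2 ltac:(lra)).
  apply Rabs_def2 in H1. apply Rabs_def2 in H2.
  pose proof (RInt_mono p Y (Y + e) Hc Hm HY ltac:(lra)) as [HI _].
  replace (Y + e - Y) with e in HI by ring.
  assert (Cm (a + e) - Cm a < e * (g + eps)).
  { assert (Hq : (Cm (a + e) - Cm a) / e < g + eps) by lra. apply div_lt_r in Hq; [|lra]. lra. }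
  assert (e * (g + eps) <= e * p (Y + e)) by (apply Rmult_le_compat_l; unfold eps in *; lra).
  lra.
Qed.


Theorem theorem2 (N : nat) (p dpp dpm : R -> R) (C dC : nat -> R -> R)
  (x xS : nat -> R)
  (HA1 : forall n, (n < N)%nat -> assumption1_cost (C n) (dC n))
  (HA2 : assumption2 p dpp dpm)
  (HA3 : exists R0, 0 < R0 /\ forall n, (n < N)%nat -> p R0 <= dC n 0)
  (HA4 : exists n, (n < N)%nat /\ p 0 > dC n 0)
  (Hconv : convex_nonneg p)
  (Hx : cournot_candidate N p dpp dpm dC x)
  (HxS : social_optimum N p C xS) :
  let X := total N x in
  let XS := total N xS in
  (p X = p XS -> efficiency N p C x xS = 1) /\
  (p X <> p XS ->
     let c := Rabs (dpp X) in
     let d := Rabs ((p XS - p X) / (XS - X)) in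
     let cb := c / d in
     cb >= 1 /\ 1 > efficiency N p C x xS /\ efficiency N p C x xS >= f_bound cb).
Proof.
  intros X XS.
  destruct HA2 as [Hpc [Hpnn [Hpm [Hp0 [Hrd0 Hder]]]]].
  destruct Hx as [Hxnn Hxc]. destruct HxS as [HxSnn HxSopt].
  destruct HA4 as [n0 [Hn0 Hn0p]].
  assert (HCconv : forall n, (n < N)%nat -> convex_nonneg (C n)) by (intros n Hn; apply (HA1 n Hn)).
  assert (HC0 : forall n, (n < N)%nat -> C n 0 = 0) by (intros n Hn; apply (HA1 n Hn)).
  assert (HCrd : forall n a, (n < N)%nat -> 0 <= a -> is_right_deriv (C n) a (dC n a)).
  { intros n a Hn Ha. destruct (Rle_lt_or_eq_dec 0 a Ha) as [Hlt|He].
    - apply dpl_right. apply (HA1 n Hn); auto.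
    - subst a. apply (HA1 n Hn). }
  assert (HCld : forall n a, (n < N)%nat -> 0 < a -> is_left_deriv (C n) a (dC n a)).
  { intros n a Hn Ha. apply dpl_left. apply (HA1 n Hn); auto. }
  assert (HX0 : 0 <= X) by (apply total_nonneg; auto).
  assert (HXS0 : 0 <= XS) by (apply total_nonneg; auto).
  assert (Hxle : forall n, (n < N)%nat -> x n <= X) by (intros; apply rsum_single; auto).
  assert (HxSle : forall n, (n < N)%nat -> xS n <= XS) by (intros; apply rsum_single; auto).
  assert (HXp : 0 < X).
  { destruct (Rle_lt_or_eq_dec 0 X HX0) as [|HX]; auto. exfalso.
    assert (x n0 = 0) by (pose proof (Hxle n0 Hn0); pose proof (Hxnn n0 Hn0); lra).
    destruct (Hxc n0 Hn0) as [_ H1]. fold X in H1. rewrite <- HX in H1. rewrite H in H1. lra. }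
  destruct (Hder X HXp) as [Hld Hrd].
  set (P := p X) in *. set (Q := p XS) in *.
  assert (Hdpp0 : dpp X <= 0).
  { apply (rd_le p X (dpp X) 0 1 Hrd ltac:(lra)). intros h Hh.
    apply div_le_l; [lra|]. assert (p (X + h) <= p X) by (apply Hpm; lra). lra. }
  assert (Hdle : dpm X <= dpp X) by (apply (ld_le_rd p X); auto).
  destruct (rsum_pos_ex N x HXp) as [m0 [Hm0 Hxm0]].
  assert (Hdeq : dpm X = dpp X).
  { destruct (Hxc m0 Hm0) as [H1 H2]. specialize (H1 Hxm0). fold X in H1, H2.
    assert (x m0 * (dpp X - dpm X) <= 0) by lra.
    assert (dpp X - dpm X <= 0).
    { destruct (Rle_or_lt (dpp X - dpm X) 0); auto. nra. }
    lra. }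
  set (c := Rabs (dpp X)).
  assert (Hc : dpp X = - c) by (unfold c; rewrite Rabs_left1; lra).
  assert (Hc0 : 0 <= c) by (unfold c; apply Rabs_pos).
  assert (Hal1 : forall n, (n < N)%nat -> P - c * x n <= dC n (x n)).
  { intros n Hn. destruct (Hxc n Hn) as [_ H]. fold X in H. fold P in H. rewrite Hc in H. lra. }
  assert (Hal2 : forall n, (n < N)%nat -> 0 < x n -> dC n (x n) = P - c * x n).
  { intros n Hn Hxn. destruct (Hxc n Hn) as [H1 H]. specialize (H1 Hxn). fold X P in H, H1.
    rewrite Hdeq, Hc in H1. rewrite Hc in H. lra. }
  set (W := welfare N p C) in *.
  assert (HWxS : 0 < W xS).
  { destruct (gain p (C n0) 0 (dC n0 0) 0 Hpc Hpm ltac:(lra) ltac:(lra) (HCrd n0 0 Hn0 ltac:(lra)) Hn0p)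
      as [e [He Hg]].
    set (z := fun _ : nat => 0).
    assert (Hz : nonneg_vec N z) by (intros n Hn; unfold z; lra).
    assert (Hz0 : total N z = 0) by (unfold total, z; apply rsum_zero).
    assert (HWz : W z = 0).
    { unfold W, welfare. rewrite Hz0. rewrite Rint_RInt by (auto; lra). rewrite RInt_point.
      rewrite (rsum_ext N _ (fun _ => 0)). rewrite rsum_zero. simpl. unfold zero; simpl. ring.
      intros n Hn. unfold z. apply HC0; auto. }
    pose proof (W_upd N p C z n0 e Hpc Hz Hn0 ltac:(lra)) as HW. fold W in HW.
    rewrite Hz0, HWz in HW. replace (z n0) with 0 in HW by reflexivity. replace (0 + e) with e in HW by ring.
    replace (0 + e) with e in Hg by ring.
    assert (W (upd z n0 e) <= W xS) by (apply HxSopt; apply nonneg_upd; auto; unfold z; lra).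
    lra. }
  assert (HWx : W x <= W xS) by (apply HxSopt; auto).
  assert (Hcost1 : forall n, (n < N)%nat -> (P - c * x n) * (xS n - x n) <= C n (xS n) - C n (x n)).
  { intros n Hn. destruct (Rle_or_lt (x n) (xS n)) as [Hle|Hlt].
    - pose proof (sub_right (C n) (x n) (dC n (x n)) (xS n) (HCconv n Hn) (HCrd n (x n) Hn (Hxnn n Hn)) (Hxnn n Hn) Hle).
      pose proof (Hal1 n Hn). nra.
    - assert (0 < x n) by (pose proof (HxSnn n Hn); lra).
      pose proof (sub_left (C n) (x n) (dC n (x n)) (xS n) (HCconv n Hn) (HCld n (x n) Hn H) (HxSnn n Hn) ltac:(lra)).
      rewrite (Hal2 n Hn H) in H0. nra. }
  assert (Hcost2 : forall n, (n < N)%nat -> C n (x n) <= (P - c * x n) * x n).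
  { intros n Hn. destruct (Rle_lt_or_eq_dec 0 (x n) (Hxnn n Hn)) as [Hlt|He].
    - pose proof (sub_left (C n) (x n) (dC n (x n)) 0 (HCconv n Hn) (HCld n (x n) Hn Hlt) ltac:(lra) ltac:(lra)).
      rewrite (Hal2 n Hn Hlt) in H. rewrite (HC0 n Hn) in H. lra.
    - rewrite <- He. rewrite (HC0 n Hn). lra. }
  set (Sg := XS - X).
  set (sxy := rsum N (fun n => x n * (xS n - x n))).
  set (sx2 := rsum N (fun n => x n * x n)).
  assert (HSsum : rsum N (fun n => xS n - x n) = Sg) by (rewrite rsum_minus; auto).
  assert (HD : W xS - W x <= RInt p X XS - P * Sg + c * sxy).
  { unfold W, welfare. fold X XS.
    rewrite <- (Rint_diff p X XS) by auto.
    assert (rsum N (fun n => (P - c * x n) * (xS n - x n)) <= rsum N (fun n => C n (xS n) - C n (x n)))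
      by (apply rsum_le; auto).
    rewrite rsum_minus in H.
    rewrite (rsum_ext N (fun n => (P - c * x n) * (xS n - x n)) (fun n => P * (xS n - x n) + (- c) * (x n * (xS n - x n)))) in H
      by (intros; ring).
    rewrite rsum_plus, !rsum_scal in H. fold sxy in H. rewrite HSsum in H. lra. }
  assert (HWlow : RInt p 0 X - P * X + c * sx2 <= W x).
  { unfold W, welfare. fold X. rewrite Rint_RInt by (auto; lra).
    assert (rsum N (fun n => C n (x n)) <= rsum N (fun n => (P - c * x n) * x n)) by (apply rsum_le; auto).
    rewrite (rsum_ext N (fun n => (P - c * x n) * x n) (fun n => P * x n + (- c) * (x n * x n))) in H by (intros; ring).
    rewrite rsum_plus, !rsum_scal in H. fold sx2 in H. unfold total in X. fold X in H. lra. }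
  assert (HconA : forall n, (n < N)%nat -> x n < xS n -> dC n (x n) <= Q).
  { intros n Hn Hlt. pose proof (HxSle n Hn) as Hle. pose proof (Hxnn n Hn) as Hx0.
    apply (cont_left_le p XS _ (xS n - x n) Hpc ltac:(lra) ltac:(lra)).
    intros e He.
    assert (Htmp : 0 <= total N xS + - e). { change (total N xS) with XS. lra. }
    pose proof (W_upd N p C xS n (- e) Hpc HxSnn Hn Htmp) as HW. fold W XS in HW.
    assert (W (upd xS n (- e)) <= W xS) by (apply HxSopt; apply nonneg_upd; auto; lra).
    pose proof (opp_RInt_swap p (XS - e) XS (exR p (XS - e) XS Hpc ltac:(lra) ltac:(lra))) as Hsw.
    replace (XS + - e) with (XS - e) in HW by ring.
    rewrite <- Hsw in HW. unfold opp in HW; simpl in HW.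
    pose proof (RInt_mono p (XS - e) XS Hpc Hpm ltac:(lra) ltac:(lra)) as [_ HI].
    replace (XS - (XS - e)) with e in HI by ring.
    pose proof (slope_right (C n) (x n) (dC n (x n)) (xS n - e) (xS n) (HCconv n Hn) (HCrd n (x n) Hn Hx0) Hx0 ltac:(lra) ltac:(lra)) as Hs.
    replace (xS n - (xS n - e)) with e in Hs by ring.
    replace (xS n + - e) with (xS n - e) in HW by ring.
    assert (Hk: dC n (x n) * e <= C n (xS n) - C n (xS n - e)).
    { apply (Rmult_le_compat_r e) in Hs; [|lra].
      replace ((C n (xS n) - C n (xS n - e)) / e * e) with (C n (xS n) - C n (xS n - e)) in Hs by (field; lra). exact Hs. }
    apply (Rmult_le_reg_r e); [lra|]. lra. }
  assert (HconB : forall n, (n < N)%nat -> xS n < x n -> Q <= dC n (x n)).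
  { intros n Hn Hlt. pose proof (HxSnn n Hn) as Hx0.
    apply (cont_right_ge p XS _ (x n - xS n) Hpc ltac:(lra) ltac:(lra)).
    intros e He.
    pose proof (W_upd N p C xS n e Hpc HxSnn Hn ltac:(fold XS; lra)) as HW. fold W XS in HW.
    assert (W (upd xS n e) <= W xS) by (apply HxSopt; apply nonneg_upd; auto; lra).
    pose proof (RInt_mono p XS (XS + e) Hpc Hpm ltac:(lra) ltac:(lra)) as [HI _].
    replace (XS + e - XS) with e in HI by ring.
    pose proof (slope_left (C n) (x n) (dC n (x n)) (xS n) (xS n + e) (HCconv n Hn) (HCld n (x n) Hn ltac:(lra)) Hx0 ltac:(lra) ltac:(lra)) as Hs.
    replace (xS n + e - xS n) with e in Hs by ring.
    assert (Hk: C n (xS n + e) - C n (xS n) <= dC n (x n) * e).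
    { apply (Rmult_le_compat_r e) in Hs; [|lra].
      replace ((C n (xS n + e) - C n (xS n)) / e * e) with (C n (xS n + e) - C n (xS n)) in Hs by (field; lra). exact Hs. }
    apply (Rmult_le_reg_r e); [lra|]. lra. }
  assert (Hxsn : forall n, (n < N)%nat -> x n <= X) by auto.
  split.
  - intros HPQ.
    assert (A1 : RInt p X XS - P * Sg <= 0).
    { destruct (Rle_or_lt X XS) as [Hle|Hlt].
      - pose proof (RInt_mono p X XS Hpc Hpm HX0 Hle) as [_ HI]. unfold Sg. fold P in HI. lra.
      - pose proof (opp_RInt_swap p XS X (exR p XS X Hpc HXS0 HX0)) as Hsw.
        rewrite <- Hsw. unfold opp; simpl. unfold AbelianGroup.opp; simpl.
        pose proof (RInt_mono p XS X Hpc Hpm HXS0 ltac:(lra)) as [HI _]. fold P in HI. unfold Sg. lra. }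
    assert (A2 : c * sxy <= 0).
    { destruct (Rle_lt_or_eq_dec 0 c Hc0) as [Hcp|Hc0e]; [| rewrite <- Hc0e; lra].
      assert (HXeq : XS = X).
      { destruct (Rtotal_order X XS) as [Hlt|[Heq|Hgt]]; [exfalso| auto| exfalso].
        - assert (0 <= dpp X).
          { apply (rd_ge p X (dpp X) 0 (XS - X) Hrd ltac:(lra)). intros h Hh.
            apply div_le_r; [lra|]. assert (p XS <= p (X + h)) by (apply Hpm; lra). fold Q in H. fold P. lra. }
          lra.
        - assert (0 <= dpm X).
          { apply (ld_ge p X (dpm X) 0 (X - XS) Hld ltac:(lra)). intros h Hh.
            replace ((p (X - h) - p X) / - h) with ((p X - p (X - h)) / h) by (field; lra).
            apply div_le_r; [lra|]. assert (p (X - h) <= p XS) by (apply Hpm; lra). fold Q in H. fold P. lra. }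
          lra. }
      assert (Hy : forall n, (n < N)%nat -> x n <= xS n).
      { intros n Hn. destruct (Rle_or_lt (x n) (xS n)) as [|Hlt]; auto. exfalso.
        pose proof (HxSnn n Hn). pose proof (HconB n Hn Hlt). rewrite (Hal2 n Hn ltac:(lra)) in H0.
        assert (0 < c * x n) by (apply Rmult_lt_0_compat; lra). lra. }
      assert (sxy <= rsum N (fun n => X * (xS n - x n))).
      { apply rsum_le. intros n Hn. pose proof (Hy n Hn). pose proof (Hxle n Hn).
        apply Rmult_le_compat_r; lra. }
      rewrite rsum_scal, HSsum in H. unfold Sg in H. rewrite HXeq in H.
      assert (sxy <= 0) by lra. nra. }
    assert (HWe : W x = W xS) by lra.
    unfold efficiency. fold W. rewrite HWe. field. lra.
  - intros HPQ. cbv zeta. change (Rabs (dpp X)) with c.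
    assert (HSpos : 0 < Sg).
    { destruct (Rtotal_order Sg 0) as [Hneg|[H0|Hpos]]; auto; exfalso.
      - pose proof Hneg as Hneg0. rewrite <- HSsum in Hneg. destruct (rsum_neg_ex N _ Hneg) as [n [Hn Hyn]].
        pose proof (HxSnn n Hn) as Hq1. pose proof (HconB n Hn ltac:(lra)) as Hq2.
        rewrite (Hal2 n Hn ltac:(lra)) in Hq2.
        assert (0 <= c * x n) by (apply Rmult_le_pos; lra).
        assert (P <= Q) by (unfold P, Q; apply Hpm; unfold Sg in Hneg0; lra). lra.
      - apply HPQ. unfold P, Q. unfold Sg in H0. replace XS with X by lra. auto. }
    assert (HQP : Q < P).
    { assert (Q <= P) by (unfold P, Q; apply Hpm; unfold Sg in HSpos; lra). lra. }
    set (dd := (P - Q) / Sg).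
    assert (Hdd : Rabs ((Q - P) / Sg) = dd).
    { rewrite Rabs_left. unfold dd. field. lra.
      replace ((Q - P) / Sg) with (- ((P - Q) / Sg)) by (field; lra).
      assert (0 < (P - Q) / Sg) by (apply Rdiv_lt_0_compat; lra). lra. }
    rewrite Hdd.
    assert (Hddp : 0 < dd) by (apply Rdiv_lt_0_compat; lra).
    assert (HddS : dd * Sg = P - Q) by (unfold dd; field; lra).
    assert (Hcd : dd <= c).
    { pose proof (slope_right p X (dpp X) X XS Hconv Hrd HX0 ltac:(lra) ltac:(unfold Sg in HSpos; lra)) as Hs.
      fold P Q in Hs. replace ((Q - P) / (XS - X)) with (- dd) in Hs by (unfold dd, Sg; field; unfold Sg in HSpos; lra).
      lra. }
    assert (Hcp : 0 < c) by lra.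
    assert (Hk1 : 1 <= c / dd) by (apply div_le_r; lra).
    assert (Hint0 : P * X + c * X * X / 2 <= RInt p 0 X).
    { pose proof (RInt_lower_lin p (P + c * X) (- c) 0 X Hpc ltac:(lra) ltac:(lra)) as H.
      replace ((P + c * X) * (X - 0) + - c * (X * X - 0 * 0) / 2) with (P * X + c * X * X / 2) in H by field.
      apply H. intros t Ht.
      pose proof (sub_left p X (dpm X) t Hconv Hld ltac:(lra) ltac:(lra)). rewrite Hdeq, Hc in H0. fold P in H0. lra. }
    assert (HintS : RInt p X XS <= (P + Q) / 2 * Sg).
    { set (B := (Q - P) / Sg).
      pose proof (RInt_upper_lin p (P - B * X) B X XS Hpc HX0 ltac:(unfold Sg in HSpos; lra)) as H.
      replace ((P - B * X) * (XS - X) + B * (XS * XS - X * X) / 2) with ((P + Q) / 2 * Sg) in H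
        by (unfold B, Sg; field; unfold Sg in HSpos; lra).
      apply H. intros t Ht.
      pose proof (conv3 p X t XS Hconv ltac:(lra) ltac:(lra)) as Hc3. fold P Q in Hc3.
      apply (Rmult_le_reg_r Sg); [lra|].
      replace ((P - B * X + B * t) * Sg) with (P * Sg + (Q - P) * (t - X)) by (unfold B; field; lra).
      unfold Sg. unfold Sg in HSpos. nra. }
    destruct (argmax_ex N x (fun n => xS n - x n)) as [[m [Hm [Hym Hmax]]]|Hall].
    2:{ exfalso. assert (rsum N (fun n => xS n - x n) <= rsum N (fun _ => 0)) by (apply rsum_le; auto).
        rewrite rsum_zero, HSsum in H. lra. }
    assert (HM : dd * Sg <= c * x m).
    { pose proof (HconA m Hm ltac:(lra)). pose proof (Hal1 m Hm). lra. }
    set (M := x m) in *.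
    assert (HM0 : 0 <= M) by (apply Hxnn; auto).
    set (b := rsum N (fun n => if Rle_dec (xS n - x n) 0 then x n else 0)).
    assert (Hb0 : 0 <= b).
    { assert (rsum N (fun _ => 0) <= b).
      { unfold b. apply rsum_le. intros n Hn.
        destruct (Rle_dec (xS n - x n) 0); [apply Hxnn; auto| lra]. }
      rewrite rsum_zero in H. exact H. }
    assert (Hsxy : sxy <= M * Sg + M * b).
    { unfold sxy, b. rewrite <- HSsum. rewrite <- !rsum_scal. rewrite <- rsum_plus.
      apply rsum_le. intros n Hn. pose proof (Hxnn n Hn). pose proof (HxSnn n Hn).
      destruct (Rle_dec (xS n - x n) 0) as [Hl|Hl].
      - assert (x n * (xS n - x n) <= 0) by (apply Rmult_le_0_l_aux; lra) || nra.
        assert (0 <= M * (xS n - x n) + M * x n) by nra. lra.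
      - pose proof (Hmax n Hn ltac:(lra)). nra. }
    assert (HXb : M + b <= X).
    { pose proof (rsum_ind N m x Hm) as Hind. fold M in Hind.
      unfold X, total, b. rewrite <- Hind. rewrite <- rsum_plus.
      apply rsum_le. intros n Hn. pose proof (Hxnn n Hn).
      destruct (Nat.eq_dec n m) as [->|Hne].
      - unfold M in *. destruct (Rle_dec (xS m - x m) 0); [lra|]. lra.
      - destruct (Rle_dec (xS n - x n) 0); lra. }
    assert (Hsx2 : M * M <= sx2).
    { unfold sx2, M. apply (rsum_single N (fun n => x n * x n)); auto. intros n Hn. pose proof (Hxnn n Hn). nra. }
    set (W0 := c * ((M + b) ^ 2 / 2 + M ^ 2)).
    set (U0 := - dd * Sg ^ 2 / 2 + c * M * (Sg + b)).
    assert (HW0 : W0 <= W x).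
    { unfold W0. assert ((M + b) ^ 2 <= X * X) by nra. nra. }
    assert (HU0 : W xS - W x <= U0).
    { unfold U0. assert (c * sxy <= c * (M * Sg + M * b)) by (apply Rmult_le_compat_l; lra).
      assert ((P + Q) / 2 * Sg - P * Sg = - dd * Sg ^ 2 / 2) by (unfold dd; field; lra). nra. }
    set (f := f_bound (c / dd)).
    destruct (f_bound_range (c / dd) Hk1) as [Hf0 Hf1]. fold f in Hf0, Hf1.
    assert (Hkey : f * U0 <= (1 - f) * W0).
    { pose proof (key_alg (c / dd) (c * M / (dd * Sg)) (c * b / (dd * Sg)) Hk1) as HK.
      assert (Hu : 1 <= c * M / (dd * Sg)) by (apply div_le_r; nra).
      assert (Hv : 0 <= c * b / (dd * Sg)) by (apply div_le_r; nra).
      specialize (HK Hu Hv). fold f in HK.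
      set (K := dd * dd * Sg * Sg / c).
      assert (HKp : 0 < K) by (unfold K; apply Rdiv_lt_0_compat; nra).
      replace U0 with (K * (c * M / (dd * Sg) * (c / dd + c * b / (dd * Sg)) - c / dd / 2))
        by (unfold U0, K; field; repeat split; lra).
      replace W0 with (K * ((c * M / (dd * Sg) + c * b / (dd * Sg)) ^ 2 / 2 + (c * M / (dd * Sg)) ^ 2))
        by (unfold W0, K; field; repeat split; lra).
      apply (Rmult_le_compat_l K) in HK; [|lra]. nra. }
    assert (Hmain : f * W xS <= W x).
    { assert ((1 - f) * W0 <= (1 - f) * W x) by (apply Rmult_le_compat_l; lra).
      assert (f * (W xS - W x) <= f * U0) by (apply Rmult_le_compat_l; lra). nra. }
    assert (Hstrict : W x < W xS).
    { assert (Hg : dC m0 (x m0) < p X).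
      { rewrite (Hal2 m0 Hm0 Hxm0). fold P. assert (0 < c * x m0) by (apply Rmult_lt_0_compat; lra). lra. }
      destruct (gain p (C m0) (x m0) (dC m0 (x m0)) X Hpc Hpm HX0 (Hxnn m0 Hm0) (HCrd m0 (x m0) Hm0 (Hxnn m0 Hm0)) Hg)
        as [e [He Hge]].
      pose proof (W_upd N p C x m0 e Hpc Hxnn Hm0 ltac:(fold X; lra)) as HW. fold W X in HW.
      assert (W (upd x m0 e) <= W xS) by (apply HxSopt; apply nonneg_upd; auto; pose proof (Hxnn m0 Hm0); lra).
      lra. }
    unfold efficiency. fold W. split; [lra|]. split.
    + apply Rlt_gt. apply (Rmult_lt_reg_r (W xS)); [lra|]. unfold Rdiv. rewrite Rmult_assoc, Rinv_l by lra. lra.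
    + apply Rle_ge. apply div_le_r; [lra|]. fold f. lra.
Qed.
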